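(* Let $\Theta=\{1,2\}$, let $P_1,\dots,P_m$ be experiments, and let $(A_1,u_1),\dots,(A_k,u_k)$ be decision problems with $|A_\ell|=2$ for every $\ell$. Then $$V\Big(P_1,\dots,P_m;\bigoplus_{\ell=1}^k(A_\ell,u_\ell)\Big)=\sum_{\ell=1}^k\max_{j=1,\dots,m}V(P_j;(A_\ell,u_\ell)).$$ Moreover, if for each $\ell$ the strategy $\sigma_\ell:\mathbf Y\to\Delta(A_\ell)$ is robustly optimal for $(A_\ell,u_\ell)$ (given $P_1,\dots,P_m$), then the strategy $\sigma:\mathbf Y\to\Delta(A_1\times\cdots\times A_k)$ defined by $\sigma(\mathbf y)=(\sigma_\ell(\mathbf y))_{\ell=1}^k$ (the product of the independent mixtures $\sigma_\ell(\mathbf y)$) is robustly optimal for $\bigoplus_{\ell=1}^k(A_\ell,u_\ell)$.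
   Context: $\Theta$ is a finite set of states. A decision problem is a pair $(A,u)$ with $A$ a finite nonempty action set and $u:\Theta\times A\to\mathbb{R}$; for $\alpha\in\Delta(A)$ write $u(\theta,\alpha)=\sum_a\alpha(a)u(\theta,a)$. An experiment is a map $P:\Theta\to\Delta(Y)$ with $Y$ a finite signal set. Given experiments $P_j:\Theta\to\Delta(Y_j)$, $j=1,\dots,m$, let $\mathbf Y=Y_1\times\cdots\times Y_m$ and let $\mathcal P(P_1,\dots,P_m)$ be the set of experiments $P:\Theta\to\Delta(\mathbf Y)$ whose $j$-th marginal is $P_j(\cdot|\theta)$ for every $\theta$ and $j$. A strategy is a map $\sigma:\mathbf Y\to\Delta(A)$. Define $V(P_1,\dots,P_m;(A,u))=\max_{\sigma}\min_{P\in\mathcal P(P_1,\dots,P_m)}\sum_{\theta}\sum_{\mathbf y\in\mathbf Y}P(\mathbf y|\theta)u(\theta,\sigma(\mathbf y))$, and call a maximizing $\sigma$ robustly optimal for $(A,u)$; for $m=1$, $V(P;(A,u))=\max_{\sigma:Y\to\Delta(A)}\sum_\theta\sum_y P(y|\theta)u(\theta,\sigma(y))$. The composition $\bigoplus_{\ell=1}^k(A_\ell,u_\ell)$ of decision problems is the decision problem with action set $A_1\times\cdots\times A_k$ and utility $u(\theta,(a_1,\dots,a_k))=\sum_{\ell=1}^k u_\ell(\theta,a_\ell)$. *)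

(* Defs.v *)
From mathcomp Require Import all_boot all_order all_algebra.
From mathcomp Require Import classical_sets reals.
Set Implicit Arguments.
Unset Strict Implicit.
Unset Printing Implicit Defensive.
Import Order.TTheory GRing.Theory Num.Theory.
Local Open Scope ring_scope.
Local Open Scope classical_set_scope.

(* The state space Theta = {1,2} is represented by bool. *)

Section Defs.
Variable R : realType.

Definition is_dist (T : finType) (p : T -> R) : Prop :=
  (forall t, 0 <= p t) /\ \sum_(t : T) p t = 1.

Definition experiment (Y : finType) (P : bool -> Y -> R) : Prop :=
  forall th, is_dist (P th).

Definition signals (m : nat) (Y : 'I_m -> finType) : finType :=
  {dffun forall j : 'I_m, Y j}.

Definition strategy (Ys A : finType) (sg : Ys -> A -> R) : Prop :=
  forall y, is_dist (sg y).

Definition mixed_util (A : finType) (u : bool -> A -> R) (th : bool) (al : A -> R) : R :=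
  \sum_(a : A) al a * u th a.

Definition payoff (Ys A : finType) (Q : bool -> Ys -> R) (u : bool -> A -> R)
  (sg : Ys -> A -> R) : R :=
  \sum_(th : bool) \sum_(y : Ys) Q th y * mixed_util u th (sg y).

Definition coupling (m : nat) (Y : 'I_m -> finType) (P : forall j, bool -> Y j -> R)
  (Q : bool -> signals Y -> R) : Prop :=
  experiment Q /\
  forall (th : bool) (j : 'I_m) (yj : Y j),
    \sum_(y : signals Y | y j == yj) Q th y = P j th yj.

Definition worst (m : nat) (Y : 'I_m -> finType) (P : forall j, bool -> Y j -> R)
  (A : finType) (u : bool -> A -> R) (sg : signals Y -> A -> R) : R :=
  inf [set x | exists Q, coupling P Q /\ x = payoff Q u sg].

Definition Vrob (m : nat) (Y : 'I_m -> finType) (P : forall j, bool -> Y j -> R)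
  (A : finType) (u : bool -> A -> R) : R :=
  sup [set x | exists sg, strategy sg /\ x = worst P u sg].

Definition V1 (Y : finType) (P : bool -> Y -> R) (A : finType) (u : bool -> A -> R) : R :=
  sup [set x | exists sg : Y -> A -> R, strategy sg /\ x = payoff P u sg].

Definition robustly_optimal (m : nat) (Y : 'I_m -> finType) (P : forall j, bool -> Y j -> R)
  (A : finType) (u : bool -> A -> R) (sg : signals Y -> A -> R) : Prop :=
  strategy sg /\
  forall sg', strategy sg' -> worst P u sg' <= worst P u sg.

Definition comp_actions (k : nat) (A : 'I_k -> finType) : finType :=
  {dffun forall l : 'I_k, A l}.

Definition comp_util (k : nat) (A : 'I_k -> finType) (u : forall l, bool -> A l -> R)
  (th : bool) (a : comp_actions A) : R :=
  \sum_(l : 'I_k) u l th (a l).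

Definition prod_strategy (Ys : finType) (k : nat) (A : 'I_k -> finType)
  (sg : forall l, Ys -> A l -> R) (y : Ys) (a : comp_actions A) : R :=
  \prod_(l : 'I_k) sg l y (a l).

End Defs.

(* Main.v *)
Require Import Defs.
From mathcomp Require Import all_boot all_order all_algebra.
From mathcomp Require Import classical_sets reals.
From mathcomp Require Import boolp.
From mathcomp Require Import ring lra zify.
Import Order.TTheory GRing.Theory Num.Theory.
Local Open Scope ring_scope.

Set Implicit Arguments.
Unset Strict Implicit.

Section Bal.
Variable R : realType.

Definition pp (x : R) : R := if 0 <= x then x else 0.

Lemma ppE x : (0 <= x -> pp x = x) /\ (x <= 0 -> pp x = 0).
Proof. rewrite /pp; case: ifP => h; split => // h2; apply/eqP; rewrite eq_le h2 //=; lra. Qed.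

Lemma pp_ge0 x : 0 <= pp x.
Proof. by rewrite /pp; case: ifP. Qed.

Lemma pp_cases x : (0 <= x /\ pp x = x) \/ (x <= 0 /\ pp x = 0).
Proof. rewrite /pp; case: ifP => h; [left|right] => //; split => //; lra. Qed.

Lemma seq_argmax (T : eqType) (s : seq T) (P : pred T) (F : T -> R) :
  has P s -> exists x, [/\ x \in s, P x & forall y, y \in s -> P y -> F y <= F x].
Proof.
elim: s => //= x s IH /orP[Px|hs].
  case: (boolP (has P s)) => [/IH [z [zs Pz Hz]]|hn].
    case: (lerP (F z) (F x)) => hzx.
      exists x; split => //; first by rewrite inE eqxx.
      move=> y; rewrite inE => /orP[/eqP->|ys Py]//; apply: le_trans (Hz _ ys Py) hzx.
    exists z; split => //; first by rewrite inE zs orbT.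
    move=> y; rewrite inE => /orP[/eqP->|ys Py]; [move=> _; exact: ltW hzx|exact: Hz].
  exists x; split => //; first by rewrite inE eqxx.
  move=> y; rewrite inE => /orP[/eqP->|ys Py]//.
  by move/hasPn: hn => /(_ y ys); rewrite Py.
case: (IH hs) => z [zs Pz Hz].
case: (boolP (P x)) => Px; last first.
  exists z; split => //; first by rewrite inE zs orbT.
  by move=> y; rewrite inE => /orP[/eqP->|ys Py]; [rewrite (negbTE Px)|exact: Hz].
case: (lerP (F z) (F x)) => hzx.
  exists x; split => //; first by rewrite inE eqxx.
  move=> y; rewrite inE => /orP[/eqP->|ys Py]//; apply: le_trans (Hz _ ys Py) hzx.
exists z; split => //; first by rewrite inE zs orbT.
move=> y; rewrite inE => /orP[/eqP->|ys Py]; [move=> _; exact: ltW hzx|exact: Hz].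
Qed.

Definition dl (x y : R) : R := if x == y then 1 else 0.

Lemma dsum (S : seq R) x (f : R -> R) : uniq S -> x \in S ->
  \sum_(x' <- S) dl x x' * f x' = f x.
Proof.
move=> uS xS; rewrite (bigD1_seq x) //= /dl eqxx mul1r big1 ?addr0 //.
by move=> y; rewrite eq_sym => /negbTE ->; rewrite mul0r.
Qed.

Lemma dsum' (S : seq R) x (f : R -> R) : uniq S -> x \in S ->
  \sum_(x' <- S) f x' * dl x' x = f x.
Proof.
move=> uS xS; rewrite -(dsum f uS xS); apply: eq_bigr => y _.
by rewrite mulrC /dl eq_sym.
Qed.

Definition Cf (S : seq R) (mu : R -> R) (c : R) := \sum_(x <- S) mu x * pp (x - c).
Definition app (S : seq R) (mu : R -> R) (K : R -> R -> R) : R -> R :=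
  fun x' => \sum_(x <- S) mu x * K x x'.

Lemma Cf_ext S f g c : (forall x, x \in S -> f x = g x) -> Cf S f c = Cf S g c.
Proof. by move=> h; rewrite /Cf big_seq_cond [RHS]big_seq_cond; apply: eq_bigr => x /andP[xS _]; rewrite h. Qed.

Lemma count_split (T : Type) (a b : pred T) s :
  count a s = (count (fun x => a x && b x) s + count (fun x => a x && ~~ b x) s)%N.
Proof. elim: s => //= x s ->; case: (a x); case: (b x) => /=; lia. Qed.

End Bal.

Set Implicit Arguments.
Unset Strict Implicit.

Section Bal2.
Variable R : realType.
Implicit Types (S : seq R) (T mu : R -> R).

Lemma ppid (v : R) : 0 <= v -> pp v = v. Proof. exact: (ppE v).1. Qed.
Lemma pp0 (v : R) : v <= 0 -> pp v = 0. Proof. exact: (ppE v).2. Qed.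

Definition convT S T := forall a r b, a \in S -> r \in S -> b \in S -> a < r -> r < b ->
  T r * (b - a) <= (b - r) * T a + (r - a) * T b.

Definition ends S T mu :=
  (exists s0, [/\ s0 \in S, (forall t, t \in S -> s0 <= t) & Cf S mu s0 = T s0]) /\
  (exists s1, [/\ s1 \in S, (forall t, t \in S -> t <= s1) & Cf S mu s1 = T s1]).

Lemma count_le_in (X : eqType) (s : seq X) (p q : pred X) :
  (forall x, x \in s -> p x -> q x) -> (count p s <= count q s)%N.
Proof.
elim: s => //= x s IH h.
have h' : forall y, y \in s -> p y -> q y by move=> y ys; apply: h; rewrite inE ys orbT.
have := IH h'; case: (boolP (p x)) => px.
  by rewrite (h x _ px) ?inE ?eqxx //= => H; rewrite ltn_add2l.
by rewrite /= add0n => H; apply: leq_trans H _; rewrite leq_addl.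
Qed.

Lemma Cf_app S mu K r :
  Cf S (app S mu K) r = \sum_(x <- S) mu x * \sum_(x' <- S) K x x' * pp (x' - r).
Proof.
rewrite /Cf /app; under eq_bigr do rewrite big_distrl /=.
rewrite exchange_big /=; apply: eq_bigr => x _; rewrite big_distrr /=.
by apply: eq_bigr => y _; rewrite mulrA.
Qed.

Lemma dsum3 S x a b (c1 c2 c3 : R) (g : R -> R) : uniq S -> x \in S -> a \in S -> b \in S ->
  \sum_(x' <- S) (c1 * dl x x' + c2 * dl a x' + c3 * dl b x') * g x' = c1 * g x + c2 * g a + c3 * g b.
Proof.
move=> uS xS aS bS.
rewrite -(dsum g uS xS) -(dsum g uS aS) -(dsum g uS bS) !mulr_sumr -!big_split /=.
by apply: eq_bigr => y _; ring.
Qed.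

Lemma bal_step S T mu s :
  uniq S -> convT S T ->
  (forall x, x \in S -> 0 <= mu x) ->
  (forall r, r \in S -> Cf S mu r <= T r) ->
  ends S T mu ->
  s \in S -> Cf S mu s < T s ->
  exists K1 : R -> R -> R,
   [/\ forall x x', x \in S -> x' \in S -> 0 <= K1 x x',
       forall x, x \in S -> \sum_(x' <- S) K1 x x' = 1,
       forall x, x \in S -> \sum_(x' <- S) K1 x x' * x' = x,
       forall r, r \in S -> Cf S (app S mu K1) r <= T r &
       ends S T (app S mu K1) /\
       (count (fun r => (Cf S (app S mu K1) r < T r)%R) S <
        count (fun r => (Cf S mu r < T r)%R) S)%N].
Proof.
move=> uS cT mu0 CT [[s0 [s0S s0min s0eq]] [s1 [s1S s1max s1eq]]] sS slt.
set C := Cf S mu in CT s0eq s1eq slt *.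
have s0s : s0 < s.
  rewrite lt_neqAle s0min // andbT; apply/eqP => e; move: slt; by rewrite -e s0eq ltxx.
have ss1 : s < s1.
  rewrite lt_neqAle s1max // andbT; apply/eqP => e; move: slt; by rewrite e s1eq ltxx.
have [a [aS /andP[ras /eqP Ca] amax]] :=
  @seq_argmax R _ S (fun t => (t < s) && (C t == T t)) id
    (introT hasP (ex_intro2 _ _ s0 s0S (introT andP (conj s0s (introT eqP s0eq))))).
have [b [bS /andP[sb /eqP Cb] bmin]] :=
  @seq_argmax R _ S (fun t => (s < t) && (C t == T t)) (fun t => - t)
    (introT hasP (ex_intro2 _ _ s1 s1S (introT andP (conj ss1 (introT eqP s1eq))))).
have ab : a < b by apply: lt_trans ras sb.
have bapos : 0 < b - a by rewrite subr_gt0.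
have inner : forall r, r \in S -> a < r -> r < b -> C r < T r.
  move=> r rS ar rb; rewrite lt_neqAle CT // andbT; apply/eqP => e.
  case: (ltgtP r s) => [rs|sr|rs].
  - by have := amax r rS; rewrite rs e eqxx /= => /(_ isT); rewrite leNgt ar.
  - by have := bmin r rS; rewrite sr e eqxx /= => /(_ isT); rewrite lerN2 leNgt rb.
  - by move: slt; rewrite -rs e ltxx.
pose ch r := ((b - r) * T a + (r - a) * T b) / (b - a).
pose ratio r := (T r - C r) / (ch r - C r).
have chT : forall r, r \in S -> a < r -> r < b -> T r <= ch r.
  by move=> r rS ar rb; rewrite /ch ler_pdivlMr //; apply: cT.
have ratio_prop : forall r, r \in S -> a < r -> r < b ->
   0 < ratio r /\ ratio r <= 1 /\ ratio r * (ch r - C r) = T r - C r.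
  move=> r rS ar rb; have h1 := inner r rS ar rb; have h2 := chT r rS ar rb.
  have hp : 0 < ch r - C r by lra.
  rewrite /ratio; split; first by apply: divr_gt0; lra.
  split; first by rewrite ler_pdivrMr //; lra.
  by rewrite divfK //; apply: lt0r_neq0.
have [r0 [r0S /andP[ar0 r0b] r0min]] :=
  @seq_argmax R _ S (fun r => (a < r) && (r < b)) (fun r => - ratio r)
    (introT hasP (ex_intro2 _ _ s sS (introT andP (conj ras sb)))).
set t := ratio r0.
have [t0 [t1 teq]] := ratio_prop r0 r0S ar0 r0b.
have tle : forall r, r \in S -> a < r -> r < b -> t <= ratio r.
  by move=> r rS ar rb; have := r0min r rS; rewrite ar rb /= lerN2 => /(_ isT).
pose K1 x x' := if (a < x) && (x < b) then
    (1 - t) * dl x x' + t * (b - x) / (b - a) * dl a x' + t * (x - a) / (b - a) * dl b x'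
  else dl x x'.
have K1sum : forall x g, x \in S -> \sum_(x' <- S) K1 x x' * g x' =
   if (a < x) && (x < b) then (1 - t) * g x + t * (b - x) / (b - a) * g a + t * (x - a) / (b - a) * g b
   else g x.
  move=> x g xS; rewrite /K1; case: ifP => _; last by rewrite dsum //.
  by rewrite dsum3.
have Eout : forall x r, x \in S -> (r <= a \/ b <= r) ->
    \sum_(x' <- S) K1 x x' * pp (x' - r) = pp (x - r).
  move=> x r xS hr; rewrite K1sum //; case: ifP => // /andP[ax xb].
  case: hr => hr.
    rewrite !ppid; try lra; field; lra.
  rewrite !pp0; try lra; field; lra.
have Ein : forall x r, x \in S -> a < r -> r < b ->
    \sum_(x' <- S) K1 x x' * pp (x' - r) =
    pp (x - r) + t * (((b - r) * pp (x - a) + (r - a) * pp (x - b)) / (b - a) - pp (x - r)).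
  move=> x r xS ar rb; rewrite K1sum //; case: ifP => [/andP[ax xb]|/negbT].
    rewrite (@pp0 (a - r)); last lra.
    rewrite (@ppid (b - r)); last lra.
    rewrite (@ppid (x - a)); last lra.
    rewrite (@pp0 (x - b)); last lra.
    field; lra.
  rewrite negb_and -!leNgt => /orP[xa|bx].
    rewrite (@pp0 (x - a)); last lra.
    rewrite (@pp0 (x - b)); last lra.
    rewrite (@pp0 (x - r)); last lra.
    field; lra.
  rewrite (@ppid (x - a)); last lra.
  rewrite (@ppid (x - b)); last lra.
  rewrite (@ppid (x - r)); last lra.
  field; lra.
set mu1 := app S mu K1.
have Cout : forall r, (r <= a \/ b <= r) -> Cf S mu1 r = C r.
  move=> r hr; rewrite Cf_app /C /Cf big_seq_cond [RHS]big_seq_cond.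
  by apply: eq_bigr => x /andP[xS _]; rewrite Eout.
have Cin : forall r, a < r -> r < b -> Cf S mu1 r = C r + t * (ch r - C r).
  move=> r ar rb; rewrite Cf_app big_seq_cond.
  under eq_bigr => x /andP[xS _] do rewrite Ein //.
  rewrite -big_seq_cond.
  under eq_bigr do rewrite mulrDr.
  rewrite big_split /=; congr (_ + _).
  rewrite /ch -Ca -Cb /C /Cf.
  under eq_bigr do rewrite mulrCA.
  rewrite -mulr_sumr; congr (_ * _).
  rewrite !mulr_sumr -big_split /= mulr_suml -sumrB.
  by apply: eq_bigr => x _; field; lra.
exists K1; split.
- move=> x x' xS x'S; rewrite /K1 /dl; case: ifP => [/andP[ax xb]|_].
    have ht : 0 <= t := ltW t0.
    have ht1 : t <= 1 := t1.
    have h1 : 0 <= t * (b - x) / (b - a) by apply: divr_ge0 => //; [apply: mulr_ge0; lra|lra].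
    have h2 : 0 <= t * (x - a) / (b - a) by apply: divr_ge0 => //; [apply: mulr_ge0; lra|lra].
    by repeat case: ifP => _; lra.
  by case: ifP.
- move=> x xS; have := K1sum x (fun _ => 1) xS; under eq_bigr do rewrite mulr1.
  move=> ->; case: ifP => // /andP[ax xb]; field; lra.
- move=> x xS; rewrite (K1sum x id xS); case: ifP => // /andP[ax xb]; field; lra.
- move=> r rS; case: (boolP ((a < r) && (r < b))) => [/andP[ar rb]|].
    rewrite Cin //; have [_ [_ hr]] := ratio_prop r rS ar rb.
    have := tle r rS ar rb; have := chT r rS ar rb; have := inner r rS ar rb.
    move=> h1 h2 h3; have hh : t * (ch r - C r) <= ratio r * (ch r - C r) by apply: ler_wpM2r => //; lra.
    rewrite hr in hh; lra.
  rewrite negb_and -!leNgt => hr; rewrite Cout; first by apply: CT.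
  by case/orP: hr; [left|right].
- split; first split.
    exists s0; split => //; rewrite Cout //; left.
    by have := amax s0 s0S; rewrite s0s s0eq eqxx /= => /(_ isT).
  exists s1; split => //; rewrite Cout //; right.
  by have := bmin s1 s1S; rewrite ss1 s1eq eqxx /= lerN2 => /(_ isT).
- have Cr0 : Cf S mu1 r0 = T r0 by rewrite Cin // teq; ring.
  apply: (@leq_trans (count (fun r => (C r < T r) && (r != r0)) S).+1).
    rewrite ltnS; apply: count_le_in => r rS.
    case: (boolP ((a < r) && (r < b))) => [/andP[ar rb]|].
      move=> hlt; rewrite inner //=; apply/eqP => e; move: hlt; by rewrite e Cr0 ltxx.
    rewrite negb_and -!leNgt => hr; rewrite Cout; last by case/orP: hr; [left|right].
    move=> ->; apply/eqP => e; move: hr; rewrite e leNgt ar0 /= leNgt r0b.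
    done.
  rewrite (count_split (fun r => C r < T r) (fun r => r != r0) S) -addn1 leq_add2l.
  rewrite -has_count; apply/hasP; exists r0 => //.
  by rewrite inner // eqxx.
Qed.

End Bal2.

Set Implicit Arguments.
Unset Strict Implicit.

Section Bal3.
Variable R : realType.
Implicit Types (S : seq R) (T mu : R -> R).

Lemma balayage S T : uniq S -> convT S T ->
  forall n mu,
  (forall x, x \in S -> 0 <= mu x) ->
  (forall r, r \in S -> Cf S mu r <= T r) ->
  ends S T mu ->
  (count (fun r => (Cf S mu r < T r)%R) S <= n)%N ->
  exists K : R -> R -> R,
   [/\ forall x x', x \in S -> x' \in S -> 0 <= K x x',
       forall x, x \in S -> \sum_(x' <- S) K x x' = 1,
       forall x, x \in S -> \sum_(x' <- S) K x x' * x' = x &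
       forall r, r \in S -> Cf S (app S mu K) r = T r].
Proof.
move=> uS cT n; elim: n => [|n IH] mu mu0 CT hends hc.
  exists (@dl R); split.
  - by move=> x x' _ _; rewrite /dl; case: ifP.
  - by move=> x xS; under eq_bigr do rewrite -[dl _ _]mulr1; rewrite dsum.
  - by move=> x xS; rewrite dsum.
  - move=> r rS; rewrite (@Cf_ext _ _ _ mu); last first.
      by move=> x xS; rewrite /app dsum'.
    apply/eqP; rewrite eq_le CT //=; rewrite leNgt; apply/negP => h.
    have : has (fun r => (Cf S mu r < T r)%R) S by apply/hasP; exists r.
    by rewrite has_count; move: hc; rewrite leqn0 => /eqP ->.
case: (boolP (has (fun r => (Cf S mu r < T r)%R) S)) => [/hasP[s sS slt]|hn].
  have [K1 [K10 K1r K1m CT1 [hends1 hc1]]] := bal_step uS cT mu0 CT hends sS slt.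
  have mu10 : forall x, x \in S -> 0 <= app S mu K1 x.
    move=> x xS; rewrite /app big_seq_cond; apply: sumr_ge0 => y /andP[yS _].
    by apply: mulr_ge0; [apply: mu0|apply: K10].
  have hc1' : (count (fun r => (Cf S (app S mu K1) r < T r)%R) S <= n)%N.
    by rewrite -ltnS; apply: leq_trans hc1 hc.
  have [K2 [K20 K2r K2m CT2]] := IH _ mu10 CT1 hends1 hc1'.
  exists (fun x x'' => \sum_(x' <- S) K1 x x' * K2 x' x''); split.
  - move=> x x'' xS x''S; rewrite big_seq_cond; apply: sumr_ge0 => y /andP[yS _].
    by apply: mulr_ge0; [apply: K10|apply: K20].
  - move=> x xS; rewrite exchange_big /=.
    transitivity (\sum_(x' <- S) K1 x x'); last exact: K1r.
    rewrite [LHS]big_seq_cond [RHS]big_seq_cond; apply: eq_bigr => y /andP[yS _].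
    by rewrite -mulr_sumr K2r // mulr1.
  - move=> x xS; under eq_bigr do rewrite mulr_suml.
    rewrite exchange_big /=.
    transitivity (\sum_(x' <- S) K1 x x' * x'); last exact: K1m.
    rewrite [LHS]big_seq_cond [RHS]big_seq_cond; apply: eq_bigr => y /andP[yS _].
    by rewrite -[X in _ = _ * X](K2m y yS) mulr_sumr; apply: eq_bigr => z _; rewrite mulrA.
  - move=> r rS; rewrite -(CT2 r rS); apply: Cf_ext => x'' _.
    rewrite /app; under eq_bigr do rewrite mulr_sumr.
    rewrite exchange_big /=; apply: eq_bigr => y _; rewrite mulr_suml.
    by apply: eq_bigr => z _; rewrite mulrA.
exists (@dl R); split.
- by move=> x x' _ _; rewrite /dl; case: ifP.
- by move=> x xS; under eq_bigr do rewrite -[dl _ _]mulr1; rewrite dsum.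
- by move=> x xS; rewrite dsum.
- move=> r rS; rewrite (@Cf_ext _ _ _ mu); last first.
    by move=> x xS; rewrite /app dsum'.
  apply/eqP; rewrite eq_le CT //=; rewrite leNgt; apply/negP => h.
  by case/negP: hn; apply/hasP; exists r.
Qed.


Lemma Cf_uniq S f g : uniq S ->
  \sum_(x <- S) f x = \sum_(x <- S) g x ->
  (forall s, s \in S -> Cf S f s = Cf S g s) ->
  forall x, x \in S -> f x = g x.
Proof.
move=> uS hs hC.
pose h x := f x - g x.
have hC' : forall s, s \in S -> \sum_(x <- S) h x * pp (x - s) = 0.
  move=> s sS; rewrite /h; under eq_bigr do rewrite mulrBl.
  by rewrite sumrB -/(Cf S f s) -/(Cf S g s) hC // subrr.
have hs' : \sum_(x <- S) h x = 0 by rewrite /h sumrB hs subrr.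
case: (boolP (has (fun x => h x != 0) S)) => [hP|hn]; last first.
  move=> x xS; apply/eqP; rewrite -subr_eq0; apply/negPn/negP => hx.
  by case/negP: hn; apply/hasP; exists x.
have [xs [xsS hxs xsmax]] := @seq_argmax R _ S (fun x => h x != 0) id hP.
have others : forall y, y \in S -> y != xs -> h y != 0 -> y < xs.
  by move=> y yS yn hy; rewrite lt_neqAle yn /=; apply: xsmax.
exfalso; move/negP: hxs; apply.
case: (boolP (has (fun t => t < xs) S)) => [hb|hn].
  have [s' [s'S s'lt s'max]] := @seq_argmax R _ S (fun t => t < xs) id hb.
  have := hC' s' s'S; rewrite (bigD1_seq xs) //= big_seq_cond big1 ?addr0; last first.
    move=> y /andP[yS yn]; case: (eqVneq (h y) 0) => [->|hy]; first by rewrite mul0r.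
    have := s'max y yS (others y yS yn hy) => ys'.
    by rewrite pp0 ?mulr0 // subr_le0.
  rewrite ppid; last by rewrite subr_ge0 ltW.
  move/eqP; rewrite mulf_eq0 => /orP[] //; rewrite subr_eq0 => /eqP e.
  by move: s'lt; rewrite e ltxx.
move: hs'; rewrite (bigD1_seq xs) //= big_seq_cond big1 ?addr0 => [->//|y /andP[yS yn]].
apply/eqP/negP => hy; case/negP: hn; apply/hasP; exists y => //.
by apply: others => //; apply/negP.
Qed.

End Bal3.

Set Implicit Arguments.
Unset Strict Implicit.

Section Dep.
Variable R : comNzRingType.

Lemma dffun_sum_prod (I : finType) (Y : I -> finType) (F : forall i, Y i -> R) :
  \sum_(y : {dffun forall i, Y i}) \prod_i F i (y i) = \prod_i \sum_(z : Y i) F i z.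
Proof.
pose J := {i : I & Y i}.
pose Fs (t : J) := F (tag t) (tagged t).
have step1 : forall i, \sum_(z : Y i) F i z = \sum_(t : J | tag t == i) Fs t.
  move=> i; transitivity (\sum_(i' | i' == i) \sum_(z : Y i') F i' z).
    by rewrite big_pred1_eq.
  rewrite (sig_big_dep (fun i' => i' == i) (fun i' (z : Y i') => true) F).
  by apply: eq_bigl => t; rewrite andbT.
under [RHS]eq_bigr do rewrite step1.
rewrite (bigA_distr_big_dep (fun i (t : J) => tag t == i) (fun i t => Fs t)).
rewrite [RHS]big_sub.
pose h2 (y : {dffun forall i, Y i}) := to_family_tagged_with (fprod_of_dffun y).
have bh : bijective h2.
  exists (fun g => dffun_of_fprod (of_family_tagged_with g)) => y.
    by rewrite /h2 to_family_tagged_withK fprod_of_dffunK.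
  by rewrite /h2 dffun_of_fprodK of_family_tagged_withK.
rewrite [RHS](reindex h2); last by apply: onW_bij.
apply: eq_bigr => y _; apply: eq_bigr => i _.
by rewrite /h2 /= ffunE.
Qed.


Lemma dffun_sum_prod1 (I : finType) (Y : I -> finType) (F : forall i, Y i -> R) j (yj : Y j) :
  \sum_(y : {dffun forall i, Y i} | y j == yj) \prod_i F i (y i) =
  F j yj * \prod_(i | i != j) \sum_(z : Y i) F i z.
Proof.
pose ind i (z : Y i) : R := if Tagged Y z == Tagged Y yj then 1 else 0.
pose F' i z := F i z * (if i == j then ind i z else 1).
have e1 : forall y : {dffun forall i, Y i},
    \prod_i F' i (y i) = (if y j == yj then 1 else 0) * \prod_i F i (y i).
  move=> y; rewrite /F' big_split /= [X in _ * X = _](bigD1 j) //= eqxx.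
  rewrite [X in _ * (_ * X) = _]big1; last by move=> i ij; rewrite (negbTE ij).
  by rewrite mulr1 /ind eq_Tagged /= mulrC.
rewrite big_mkcond /=.
transitivity (\sum_(y : {dffun forall i, Y i}) \prod_i F' i (y i)).
  by apply: eq_bigr => y _; rewrite e1; case: ifP; rewrite ?mul1r ?mul0r.
rewrite dffun_sum_prod (bigD1 j) //=; congr (_ * _).
  rewrite /F' eqxx (bigD1 yj) //= /ind eqxx mulr1 big1 ?addr0 // => z zn.
  by rewrite eq_Tagged /= (negbTE zn) mulr0.
apply: eq_bigr => i ij; rewrite /F' (negbTE ij).
by under eq_bigr do rewrite mulr1.
Qed.

End Dep.

Set Implicit Arguments.
Unset Strict Implicit.

Section Gen.
Variable R : realType.

Lemma agg_sum (Ys : finType) (p : Ys -> R) (g : Ys -> R) (S : seq R) (f : R -> R) :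
  uniq S -> (forall y, p y \in S) ->
  \sum_(x <- S) (\sum_(y | p y == x) g y) * f x = \sum_y g y * f (p y).
Proof.
move=> uS pS.
under eq_bigr do rewrite big_distrl big_mkcond /=.
rewrite exchange_big /=; apply: eq_bigr => y _.
rewrite -(dsum (fun x => g y * f x) uS (pS y)); apply: eq_bigr => x _.
by rewrite /dl; case: ifP; rewrite ?mul1r ?mul0r.
Qed.

Definition Phi (A B C D q1 q0 : R) := Num.max (q1 * A + q0 * B) (q1 * C + q0 * D).

Lemma Phi_hom A B C D l q1 q0 : 0 <= l -> Phi A B C D (l * q1) (l * q0) = l * Phi A B C D q1 q0.
Proof. by move=> l0; rewrite /Phi maxr_pMr // !mulrDr !mulrA. Qed.

Lemma Phi_sum (X : eqType) (s : seq X) (lam a b : X -> R) A B C D :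
  (forall x, x \in s -> 0 <= lam x) ->
  Phi A B C D (\sum_(x <- s) lam x * a x) (\sum_(x <- s) lam x * b x) <=
  \sum_(x <- s) lam x * Phi A B C D (a x) (b x).
Proof.
move=> l0; rewrite /Phi ge_max; apply/andP; split.
  rewrite !mulr_suml -big_split /= big_seq_cond [X in _ <= X]big_seq_cond.
  apply: ler_sum => x /andP[xs _].
  by rewrite -!mulrA -mulrDr; apply: ler_wpM2l; [exact: l0|rewrite le_max lexx].
rewrite !mulr_suml -big_split /= big_seq_cond [X in _ <= X]big_seq_cond.
apply: ler_sum => x /andP[xs _].
by rewrite -!mulrA -mulrDr; apply: ler_wpM2l; [exact: l0|rewrite le_max lexx orbT].
Qed.

Definition pi (th : bool) (x : R) := if th then x else 1 - x.

Lemma pp_convex (x a r b : R) : a < r -> r < b ->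
  pp (x - r) * (b - a) <= (b - r) * pp (x - a) + (r - a) * pp (x - b).
Proof.
move=> ar rb.
have [[h1 ->]|[h1 ->]] := pp_cases (x - r);
have [[h2 ->]|[h2 ->]] := pp_cases (x - a);
have [[h3 ->]|[h3 ->]] := pp_cases (x - b); nra.
Qed.

Lemma Cf_convex (S : seq R) (mu : R -> R) a r b : (forall x, x \in S -> 0 <= mu x) -> a < r -> r < b ->
  Cf S mu r * (b - a) <= (b - r) * Cf S mu a + (r - a) * Cf S mu b.
Proof.
move=> m0 ar rb; rewrite /Cf mulr_suml !mulr_sumr -big_split /= big_seq_cond [X in _ <= X]big_seq_cond.
apply: ler_sum => x /andP[xS _].
rewrite -mulrA [X in _ <= X](_ : _ = mu x * ((b - r) * pp (x - a) + (r - a) * pp (x - b))); last by ring.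
apply: ler_wpM2l; first exact: m0.
exact: pp_convex.
Qed.

Definition fmax (X : Type) (f : X -> R) (x0 : X) (s : seq X) :=
  foldr (fun j acc => Num.max (f j) acc) (f x0) s.

Lemma fmax_ge (X : eqType) (f : X -> R) x0 s j : j \in s -> f j <= fmax f x0 s.
Proof.
elim: s => //= y s IH; rewrite inE => /orP[/eqP->|js]; rewrite le_max ?lexx //.
by rewrite IH ?orbT.
Qed.

Lemma fmax_eq (X : Type) (f : X -> R) x0 s : exists j, fmax f x0 s = f j.
Proof.
elim: s => [|y s [j IH]] /=; first by exists x0.
rewrite IH maxEle; case: ifP => _; [by exists j|by exists y].
Qed.


Lemma max_pp (u v : R) : Num.max u v = v + pp (u - v).
Proof.
rewrite maxEle; case: ifP => h.
  by rewrite pp0 ?addr0 // subr_le0.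
by rewrite ppid ?subrKC //; rewrite subr_ge0; move/negbT: h; rewrite -ltNge => /ltW.
Qed.

Lemma pp_scale (l z : R) : 0 <= l -> pp (l * z) = l * pp z.
Proof.
move=> l0; have [[h ->]|[h ->]] := pp_cases z.
  by rewrite ppid //; apply: mulr_ge0.
by rewrite pp0 ?mulr0 //; rewrite mulr_ge0_le0.
Qed.

Lemma phi_decomp (A B C D : R) : exists a0 a1 k c : R,
  (forall x, Phi A B C D x (1 - x) = a0 + a1 * x + k * pp (x - c)) /\
  (k != 0 -> (A - B - C + D != 0) /\ c = - (B - D) / (A - B - C + D)).
Proof.
set d := A - B - C + D; set e := B - D.
have key : forall x, x * A + (1 - x) * B - (x * C + (1 - x) * D) = d * x + e.
  by move=> x; rewrite /d /e; ring.
case: (ltgtP d 0) => hd.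
- exists B, (A - B), (- d), (- e / d); split; last first.
    by move=> _; split => //; rewrite lt_eqF.
  move=> x; rewrite /Phi maxC max_pp.
  have -> : x * C + (1 - x) * D - (x * A + (1 - x) * B) = (- d) * (x - - e / d).
    by rewrite -opprB key; field; rewrite lt_eqF.
  rewrite pp_scale; last by rewrite oppr_ge0 ltW.
  by congr (_ + _); ring.
- exists D, (C - D), d, (- e / d); split; last first.
    by move=> _; split => //; rewrite gt_eqF.
  move=> x; rewrite /Phi max_pp.
  have -> : x * A + (1 - x) * B - (x * C + (1 - x) * D) = d * (x - - e / d).
    by rewrite key; field; rewrite gt_eqF.
  rewrite pp_scale; last by rewrite ltW.
  by congr (_ + _); ring.
- exists (D + pp e), (C - D), 0, 0; split; last by rewrite eqxx.
  move=> x; rewrite /Phi max_pp key hd mul0r add0r mul0r addr0; ring.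
Qed.

Lemma sum_affine_pp (S : seq R) (mu : R -> R) a0 a1 k c :
  \sum_(x <- S) mu x * (a0 + a1 * x + k * pp (x - c)) =
  a0 * \sum_(x <- S) mu x + a1 * \sum_(x <- S) mu x * x + k * Cf S mu c.
Proof.
rewrite /Cf !mulr_sumr -!big_split /=; apply: eq_bigr => x _; ring.
Qed.

Lemma Cf_low (S : seq R) (mu : R -> R) c : (forall x, x \in S -> 0 <= x) -> c <= 0 ->
  Cf S mu c = \sum_(x <- S) mu x * x - c * \sum_(x <- S) mu x.
Proof.
move=> hS hc; rewrite /Cf mulr_sumr -sumrB big_seq_cond [RHS]big_seq_cond.
apply: eq_bigr => x /andP[xS _]; rewrite ppid; first ring.
by have := hS x xS; lra.
Qed.

Lemma Cf_high (S : seq R) (mu : R -> R) c : (forall x, x \in S -> x <= 1) -> 1 <= c ->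
  Cf S mu c = 0.
Proof.
move=> hS hc; rewrite /Cf big_seq_cond big1 // => x /andP[xS _]; rewrite pp0 ?mulr0 //.
by have := hS x xS; lra.
Qed.

End Gen.

Unset Implicit Arguments.
Set Strict Implicit.

Section Main.
Variable R : realType.
Variables (m : nat) (Hm : (0 < m)%N) (Y : 'I_m -> finType)
  (P : forall j : 'I_m, bool -> Y j -> R) (HP : forall j, experiment (P j)).
Variable ks : seq R.

Definition j0 : 'I_m := Ordinal Hm.
Definition wj j (y : Y j) := P j true y + P j false y.
Definition pj j (y : Y j) := P j true y / wj j y.

Lemma P0 j th y : 0 <= P j th y.
Proof. by case: (HP j th) => h _; apply: h. Qed.

Lemma Psum j th : \sum_y P j th y = 1.
Proof. by case: (HP j th). Qed.

Lemma w0 j (y : Y j) : 0 <= wj j y.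
Proof. by rewrite /wj; apply: addr_ge0; apply: P0. Qed.

Lemma Pdec j th (y : Y j) : P j th y = wj j y * pi th (pj j y).
Proof.
have h1 := P0 j true y; have h2 := P0 j false y.
rewrite /pj /pi; case: (eqVneq (wj j y) 0) => hw.
  have hw' : P j true y + P j false y = 0 by move: hw; rewrite /wj.
  have e1 : P j true y = 0 by lra.
  have e2 : P j false y = 0 by lra.
  by case: th; rewrite hw mul0r ?e1 ?e2.
case: th; first by rewrite mulrC divfK.
rewrite mulrBr mulr1 mulrC divfK //; rewrite /wj; ring.
Qed.

Lemma pj01 j (y : Y j) : 0 <= pj j y <= 1.
Proof.
have h1 := P0 j true y; have h2 := P0 j false y.
rewrite /pj; case: (eqVneq (wj j y) 0) => hw; first by rewrite hw invr0 mulr0 lexx ler01.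
have wp : 0 < wj j y by rewrite lt_neqAle eq_sym hw w0.
apply/andP; split; first by apply: divr_ge0 => //; apply: w0.
by rewrite ler_pdivrMr // mul1r /wj; lra.
Qed.

Definition S0 := 0 :: 1 :: [seq c <- ks | (0 <= c) && (c <= 1)] ++
  flatten [seq [seq pj j y | y <- enum (Y j)] | j <- enum 'I_m].
Definition S := undup S0.

Lemma uS : uniq S. Proof. exact: undup_uniq. Qed.

Lemma S01 x : x \in S -> 0 <= x <= 1.
Proof.
rewrite mem_undup !inE => /orP[/eqP->|/orP[/eqP->|]]; rewrite ?lexx ?ler01 //.
rewrite mem_cat => /orP[|/flattenP[s /mapP[j _ ->] /mapP[y _ ->]]]; last exact: pj01.
by rewrite mem_filter => /andP[].
Qed.

Lemma pS j (y : Y j) : pj j y \in S.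
Proof.
rewrite mem_undup !inE mem_cat; apply/orP; right; apply/orP; right; apply/orP; right.
by apply/flattenP; exists [seq pj j y | y <- enum (Y j)]; apply/mapP; [exists j|exists y]; rewrite ?mem_enum.
Qed.

Lemma zS : 0 \in S. Proof. by rewrite mem_undup inE eqxx. Qed.
Lemma oS : 1 \in S. Proof. by rewrite mem_undup !inE eqxx orbT. Qed.
Lemma kS c : c \in ks -> 0 <= c <= 1 -> c \in S.
Proof.
move=> cks c01; rewrite mem_undup !inE mem_cat mem_filter c01 cks /=.
by rewrite !orbT.
Qed.

Definition nu j x := \sum_(y : Y j | pj j y == x) wj j y.

Lemma nu_sum j f : \sum_(x <- S) nu j x * f x = \sum_(y : Y j) wj j y * f (pj j y).
Proof. by apply: agg_sum; [exact: uS|exact: pS]. Qed.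

Lemma nu0 j x : 0 <= nu j x.
Proof. by apply: sumr_ge0 => y _; apply: w0. Qed.

Lemma nu_mass j : \sum_(x <- S) nu j x = 2.
Proof.
transitivity (\sum_(x <- S) nu j x * 1); first by apply: eq_bigr => x _; rewrite mulr1.
rewrite nu_sum; under eq_bigr do rewrite mulr1.
by rewrite /wj big_split /= !Psum.
Qed.

Lemma nu_mean j : \sum_(x <- S) nu j x * x = 1.
Proof.
rewrite nu_sum -(Psum j true); apply: eq_bigr => y _.
by rewrite (Pdec j true y).
Qed.

Lemma Cf_nu j c : Cf S (nu j) c = \sum_(y : Y j) wj j y * pp (pj j y - c).
Proof. by rewrite /Cf nu_sum. Qed.

Lemma Cf_nu0 j : Cf S (nu j) 0 = 1.
Proof.
rewrite Cf_nu -(Psum j true); apply: eq_bigr => y _.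
by rewrite subr0 ppid ?(Pdec j true y) //; case/andP: (pj01 j y).
Qed.

Lemma Cf_nu1 j : Cf S (nu j) 1 = 0.
Proof.
rewrite Cf_nu big1 // => y _; rewrite pp0 ?mulr0 //.
by case/andP: (pj01 j y) => _; rewrite subr_le0.
Qed.

Definition Tm c := fmax (fun j => Cf S (nu j) c) j0 (enum 'I_m).

Lemma Tm_ge j c : Cf S (nu j) c <= Tm c.
Proof. by apply: (@fmax_ge R _ (fun j => Cf S (nu j) c) j0 (enum 'I_m) j); rewrite mem_enum. Qed.

Lemma Tm_eq c : exists j, Tm c = Cf S (nu j) c.
Proof. exact: fmax_eq. Qed.

Lemma convTm : convT S Tm.
Proof.
move=> a r b aS rS bS ar rb; have [j ->] := Tm_eq r.
apply: le_trans (@Cf_convex R S (nu j) a r b _ ar rb) _; first by move=> x _; apply: nu0.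
apply: lerD; apply: ler_wpM2l; try apply: Tm_ge; rewrite subr_ge0 ltW //.
Qed.

Lemma Tm0 : Tm 0 = 1. Proof. by have [j ->] := Tm_eq 0; rewrite Cf_nu0. Qed.
Lemma Tm1 : Tm 1 = 0. Proof. by have [j ->] := Tm_eq 1; rewrite Cf_nu1. Qed.

Lemma endsj j : ends S Tm (nu j).
Proof.
split.
  exists 0; split; [exact: zS| |by rewrite Cf_nu0 Tm0].
  by move=> t /S01/andP[].
exists 1; split; [exact: oS| |by rewrite Cf_nu1 Tm1].
by move=> t /S01/andP[].
Qed.

Definition Kprop (j : 'I_m) (K : R -> R -> R) :=
  [/\ forall x x', x \in S -> x' \in S -> 0 <= K x x',
      forall x, x \in S -> \sum_(x' <- S) K x x' = 1,
      forall x, x \in S -> \sum_(x' <- S) K x x' * x' = x &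
      forall r, r \in S -> Cf S (app S (nu j) K) r = Tm r].

Lemma Kex : exists K : 'I_m -> R -> R -> R, forall j, Kprop j (K j).
Proof.
suff H : forall j, exists K, Kprop j K.
  by have [K HK] := boolp.choice H; exists K.
move=> j.
apply: (@balayage R S Tm uS convTm (size S) (nu j)).
- by move=> x _; apply: nu0.
- by move=> r _; apply: Tm_ge.
- exact: endsj.
- exact: count_size.
Qed.


Section WithK.
Variable K : 'I_m -> R -> R -> R.
Hypothesis HK : forall j, Kprop j (K j).

Definition muf j x := app S (nu j) (K j) x.
Definition mus x := muf j0 x.

Lemma K0 j x x' : x \in S -> x' \in S -> 0 <= K j x x'.
Proof. by case: (HK j) => h _ _ _; apply: h. Qed.
Lemma Krow j x : x \in S -> \sum_(x' <- S) K j x x' = 1.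
Proof. by case: (HK j) => _ h _ _; apply: h. Qed.
Lemma Kmart j x : x \in S -> \sum_(x' <- S) K j x x' * x' = x.
Proof. by case: (HK j) => _ _ h _; apply: h. Qed.
Lemma KCf j r : r \in S -> Cf S (muf j) r = Tm r.
Proof. by case: (HK j) => _ _ _ h; apply: h. Qed.

Lemma muf_mass j : \sum_(x <- S) muf j x = 2.
Proof.
rewrite /muf /app exchange_big /= -(nu_mass j) big_seq_cond [RHS]big_seq_cond.
by apply: eq_bigr => x /andP[xS _]; rewrite -mulr_sumr Krow // mulr1.
Qed.

Lemma muf_mean j : \sum_(x <- S) muf j x * x = 1.
Proof.
rewrite /muf /app; under eq_bigr do rewrite mulr_suml.
rewrite exchange_big /= -(nu_mean j) big_seq_cond [RHS]big_seq_cond.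
apply: eq_bigr => x /andP[xS _]; rewrite -[X in _ = _ * X](Kmart j x xS) mulr_sumr.
by apply: eq_bigr => y _; rewrite mulrA.
Qed.

Lemma muf_eq j x : x \in S -> muf j x = mus x.
Proof.
apply: (@Cf_uniq R S (muf j) mus uS); first by rewrite /mus !muf_mass.
by move=> s sS; rewrite /mus !KCf.
Qed.

Lemma mus0 x : x \in S -> 0 <= mus x.
Proof.
move=> xS; rewrite /mus /muf /app big_seq_cond; apply: sumr_ge0 => y /andP[yS _].
by apply: mulr_ge0; [apply: nu0|apply: K0].
Qed.

Lemma Cf_mus c : c \in S -> exists j, Cf S mus c = Cf S (nu j) c.
Proof. by move=> cS; have [j hj] := Tm_eq c; exists j; rewrite -hj -(KCf j0 c cS). Qed.

Definition G j x (z : Y j) := K j (pj j z) x * wj j z / mus x.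

Lemma G0 j x (z : Y j) : x \in S -> 0 <= G j x z.
Proof.
move=> xS; rewrite /G; apply: divr_ge0; last exact: mus0.
by apply: mulr_ge0; [apply: K0 => //; apply: pS|apply: w0].
Qed.

Lemma wK_le j x (z : Y j) : x \in S -> wj j z * K j (pj j z) x <= mus x.
Proof.
move=> xS; rewrite -(muf_eq j x xS) /muf /app (bigD1_seq (pj j z)) ?pS ?uS //=.
have hn : wj j z <= nu j (pj j z).
  rewrite /nu (bigD1 z) //= lerDl; apply: sumr_ge0 => y _; apply: w0.
apply: (@le_trans _ _ (nu j (pj j z) * K j (pj j z) x)).
  by apply: ler_wpM2r => //; apply: K0 => //; apply: pS.
rewrite lerDl big_seq_cond; apply: sumr_ge0 => y /andP[yS _].
by apply: mulr_ge0; [apply: nu0|apply: K0].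
Qed.

Lemma Gsum j x : x \in S -> mus x != 0 -> \sum_(z : Y j) G j x z = 1.
Proof.
move=> xS hx; rewrite /G -mulr_suml.
have -> : \sum_(z : Y j) K j (pj j z) x * wj j z = mus x.
  rewrite -(muf_eq j x xS) /muf /app.
  rewrite (nu_sum j (fun x0 => K j x0 x)); apply: eq_bigr => z _; exact: mulrC.
by rewrite mulfV.
Qed.

Definition Pst th x := mus x * pi th x.
Definition Q th (y : signals Y) := \sum_(x <- S) Pst th x * \prod_j G j x (y j).

Lemma Pst0 th x : x \in S -> 0 <= Pst th x.
Proof.
move=> xS; rewrite /Pst /pi; apply: mulr_ge0; first exact: mus0.
by case/andP: (S01 x xS) => h1 h2; case: th; lra.
Qed.

Lemma prodG0 x (y : signals Y) : x \in S -> 0 <= \prod_j G j x (y j).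
Proof. by move=> xS; apply: prodr_ge0 => j _; apply: G0. Qed.

Lemma Qge0 th y : 0 <= Q th y.
Proof.
rewrite /Q big_seq_cond; apply: sumr_ge0 => x /andP[xS _].
by apply: mulr_ge0; [apply: Pst0|apply: prodG0].
Qed.

Lemma sumprodG x : x \in S -> mus x != 0 ->
  \sum_(y : signals Y) \prod_j G j x (y j) = 1.
Proof.
move=> xS hx; rewrite (dffun_sum_prod (fun j (z : Y j) => G j x z)).
by apply: big1 => j _; apply: Gsum.
Qed.

Lemma Qsum th : \sum_y Q th y = 1.
Proof.
rewrite /Q exchange_big /=.
transitivity (\sum_(x <- S) Pst th x).
  rewrite big_seq_cond [RHS]big_seq_cond; apply: eq_bigr => x /andP[xS _].
  rewrite -mulr_sumr; case: (eqVneq (mus x) 0) => hx.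
    by rewrite /Pst hx !mul0r.
  by rewrite sumprodG // mulr1.
rewrite /Pst /pi; case: th.
  by rewrite /mus muf_mean.
under eq_bigr do rewrite mulrBr mulr1.
by rewrite sumrB /mus muf_mass muf_mean; lra.
Qed.

Lemma Qmarg th j (yj : Y j) : \sum_(y : signals Y | y j == yj) Q th y = P j th yj.
Proof.
rewrite /Q exchange_big /=.
transitivity (\sum_(x <- S) pi th x * (K j (pj j yj) x * wj j yj)).
  rewrite big_seq_cond [RHS]big_seq_cond; apply: eq_bigr => x /andP[xS _].
  rewrite -mulr_sumr (dffun_sum_prod1 (fun i (z : Y i) => G i x z) yj).
  case: (eqVneq (mus x) 0) => hx.
    have := wK_le j x yj xS; rewrite hx => h1.
    have h2 : 0 <= wj j yj * K j (pj j yj) x.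
      by apply: mulr_ge0; [apply: w0|apply: K0 => //; apply: pS].
    have -> : K j (pj j yj) x * wj j yj = 0 by rewrite mulrC; lra.
    by rewrite /Pst hx !mul0r mulr0.
  rewrite big1; last by move=> i _; apply: Gsum.
  rewrite mulr1 /Pst /G; field; exact: hx.
transitivity (wj j yj * \sum_(x <- S) K j (pj j yj) x * pi th x).
  by rewrite mulr_sumr; apply: eq_bigr => x _; ring.
rewrite (Pdec j th yj); congr (_ * _).
rewrite /pi; case: th; first by rewrite Kmart //; apply: pS.
under eq_bigr do rewrite mulrBr mulr1.
by rewrite sumrB Krow ?pS // Kmart ?pS.
Qed.

Lemma Q_coupling : coupling P Q.
Proof.
split; last by move=> th j yj; apply: Qmarg.
by move=> th; split; [move=> y; apply: Qge0|apply: Qsum].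
Qed.

Lemma Q_val A B C D : \sum_(y : signals Y) Phi A B C D (Q true y) (Q false y) <=
   \sum_(x <- S) mus x * Phi A B C D x (1 - x).
Proof.
apply: le_trans.
  apply: ler_sum => y _.
  have e : forall th, Q th y = \sum_(x <- S) (\prod_j G j x (y j)) * Pst th x.
    by move=> th; rewrite /Q; apply: eq_bigr => x _; rewrite mulrC.
  rewrite !e; apply: Phi_sum => x xS; exact: prodG0.
rewrite exchange_big /= le_eqVlt; apply/orP; left; apply/eqP.
rewrite big_seq_cond [RHS]big_seq_cond; apply: eq_bigr => x /andP[xS _].
rewrite -mulr_suml /Pst /pi Phi_hom; last exact: mus0.
case: (eqVneq (mus x) 0) => hx; first by rewrite hx !mul0r mulr0.
by rewrite sumprodG // mul1r.
Qed.

Lemma compare A B C D :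
  (A - B - C + D != 0 -> 0 <= - (B - D) / (A - B - C + D) <= 1 ->
     - (B - D) / (A - B - C + D) \in ks) ->
  exists j, \sum_(x <- S) mus x * Phi A B C D x (1 - x) =
            \sum_(x <- S) nu j x * Phi A B C D x (1 - x).
Proof.
move=> hk; have [a0 [a1 [k [c [hphi hkc]]]]] := phi_decomp A B C D.
have e : forall mu, \sum_(x <- S) mu x * Phi A B C D x (1 - x) =
   a0 * \sum_(x <- S) mu x + a1 * \sum_(x <- S) mu x * x + k * Cf S mu c.
  by move=> mu; rewrite -sum_affine_pp; apply: eq_bigr => x _; rewrite hphi.
suff [j hj] : exists j, k * Cf S mus c = k * Cf S (nu j) c.
  by exists j; rewrite !e hj /mus muf_mass muf_mean nu_mass nu_mean.
case: (eqVneq k 0) => hk0; first by exists j0; rewrite hk0 !mul0r.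
have [hd hc] := hkc hk0.
have h0 : forall x, x \in S -> 0 <= x by move=> x /S01/andP[].
have h1 : forall x, x \in S -> x <= 1 by move=> x /S01/andP[].
case: (ltP c 0) => c0.
  exists j0; rewrite (Cf_low mus h0 (ltW c0)) (Cf_low (nu j0) h0 (ltW c0)).
  by rewrite /mus muf_mass muf_mean nu_mass nu_mean.
case: (ltP 1 c) => c1.
  by exists j0; rewrite (Cf_high mus h1 (ltW c1)) (Cf_high (nu j0) h1 (ltW c1)).
have cS : c \in S by apply: kS; [rewrite hc; apply: hk => //; rewrite -hc c0 c1|rewrite c0 c1].
by have [j hj] := Cf_mus c cS; exists j; rewrite hj.
Qed.

End WithK.

Lemma P_val j A B C D : \sum_(z : Y j) Phi A B C D (P j true z) (P j false z) =
   \sum_(x <- S) nu j x * Phi A B C D x (1 - x).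
Proof.
rewrite nu_sum; apply: eq_bigr => z _.
by rewrite (Pdec j true z) (Pdec j false z) Phi_hom //; apply: w0.
Qed.

Lemma coupling_main : exists Q : bool -> signals Y -> R, coupling P Q /\
  forall A B C D : R,
  (A - B - C + D != 0 -> 0 <= - (B - D) / (A - B - C + D) <= 1 ->
     - (B - D) / (A - B - C + D) \in ks) ->
  exists j, \sum_(y : signals Y) Phi A B C D (Q true y) (Q false y) <=
            \sum_(z : Y j) Phi A B C D (P j true z) (P j false z).
Proof.
have [K HK] := Kex; exists (Q K); split; first exact: Q_coupling.
move=> A B C D hk; have [j hj] := compare K HK A B C D hk; exists j.
by rewrite P_val -hj; apply: Q_val.
Qed.

End Main.


Set Implicit Arguments.
Unset Strict Implicit.

Section Dec.
Variable R : realType.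

Definition mxA (A : finType) (a0 : A) (f : A -> R) := fmax f a0 (enum A).

Lemma mxA_ge (A : finType) (a0 : A) (f : A -> R) a : f a <= mxA a0 f.
Proof. by apply: (@fmax_ge R _ f a0 (enum A) a); rewrite mem_enum. Qed.

Lemma mxA_eq (A : finType) (a0 : A) (f : A -> R) : exists a, mxA a0 f = f a.
Proof. exact: fmax_eq. Qed.

Definition best (Ys A : finType) (a0 : A) (Q : bool -> Ys -> R) (u : bool -> A -> R) :=
  \sum_(y : Ys) mxA a0 (fun a => \sum_th Q th y * u th a).

Lemma payoffE (Ys A : finType) (Q : bool -> Ys -> R) (u : bool -> A -> R) (sg : Ys -> A -> R) :
  payoff Q u sg = \sum_(y : Ys) \sum_(a : A) sg y a * (\sum_th Q th y * u th a).
Proof.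
rewrite /payoff /mixed_util exchange_big /=; apply: eq_bigr => y _.
under eq_bigr do rewrite mulr_sumr.
rewrite exchange_big /=; apply: eq_bigr => a _.
by rewrite mulr_sumr; apply: eq_bigr => th _; ring.
Qed.

Lemma payoff_le_best (Ys A : finType) (a0 : A) (Q : bool -> Ys -> R) (u : bool -> A -> R)
   (sg : Ys -> A -> R) : strategy sg -> payoff Q u sg <= best a0 Q u.
Proof.
move=> hs; rewrite payoffE /best; apply: ler_sum => y _.
case: (hs y) => h0 h1.
apply: (@le_trans _ _ (\sum_(a : A) sg y a * mxA a0 (fun a => \sum_th Q th y * u th a))).
  by apply: ler_sum => a _; apply: ler_wpM2l => //; apply: mxA_ge.
by rewrite -mulr_suml h1 mul1r.
Qed.

Lemma best_attained (Ys A : finType) (a0 : A) (Q : bool -> Ys -> R) (u : bool -> A -> R) :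
  exists sg : Ys -> A -> R, strategy sg /\ payoff Q u sg = best a0 Q u.
Proof.
have [am ham] := @boolp.choice Ys A (fun (y : Ys) a =>
   mxA a0 (fun a => \sum_th Q th y * u th a) = \sum_th Q th y * u th a)
   (fun y => mxA_eq a0 (fun a => \sum_th Q th y * u th a)).
exists (fun y a => if a == am y then 1 else 0); split.
  move=> y; split; first by move=> a; case: ifP.
  by rewrite (bigD1 (am y)) //= eqxx big1 ?addr0 // => a /negbTE ->.
rewrite payoffE /best; apply: eq_bigr => y _.
rewrite (bigD1 (am y)) //= eqxx mul1r ham [X in _ + X]big1 ?addr0 // => a /negbTE ->.
by rewrite mul0r.
Qed.

Lemma sup_attained (E : set R) M : E M -> (forall x, E x -> x <= M) -> sup E = M.
Proof.
move=> EM hub; apply/eqP; rewrite eq_le; apply/andP; split.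
  by apply: ge_sup; [exists M|move=> x /hub].
by apply: ub_le_sup => //; exists M => x /hub.
Qed.

Lemma V1_best (Ys A : finType) (a0 : A) (Q : bool -> Ys -> R) (u : bool -> A -> R) :
  V1 Q u = best a0 Q u.
Proof.
apply: sup_attained.
  by have [sg [hs hp]] := best_attained a0 Q u; exists sg; split => //; rewrite hp.
by move=> x [sg [hs ->]]; apply: payoff_le_best.
Qed.

Definition ubnd (A : finType) (u : bool -> A -> R) := \sum_th \sum_(a : A) `|u th a|.

Lemma payoff_lb (Ys A : finType) (Q : bool -> Ys -> R) (u : bool -> A -> R) (sg : Ys -> A -> R) :
  experiment Q -> strategy sg -> - (2 * ubnd u) <= payoff Q u sg.
Proof.
move=> hQ hs; rewrite /payoff.
have hm : forall th y, - ubnd u <= mixed_util u th (sg y).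
  move=> th y; case: (hs y) => h0 h1; rewrite /mixed_util.
  have hb : forall a, sg y a <= 1.
    move=> a; rewrite -h1 (bigD1 a) //= lerDl; exact: sumr_ge0.
  apply: (@le_trans _ _ (- \sum_(a : A) `|u th a|)).
    rewrite lerN2 /ubnd big_bool /=; case: th.
      by rewrite lerDl; apply: sumr_ge0 => a _.
    by rewrite lerDr; apply: sumr_ge0 => a _.
  rewrite -sumrN; apply: ler_sum => a _.
  have := h0 a; have := hb a.
  have : - `|u th a| <= u th a by rewrite lerNl -normrN ler_norm.
  have : u th a <= `|u th a| by apply: ler_norm.
  by move=> ha hb' h1' h0'; nra.
apply: (@le_trans _ _ (\sum_th \sum_y Q th y * (- ubnd u))).
  rewrite big_bool /= -!mulr_suml.
  case: (hQ true) => _ ->; case: (hQ false) => _ ->; lra.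
apply: ler_sum => th _; apply: ler_sum => y _; apply: ler_wpM2l; last exact: hm.
by case: (hQ th) => h _; apply: h.
Qed.

Lemma inf_attained (E : set R) M : E M -> (forall x, E x -> M <= x) -> inf E = M.
Proof.
move=> EM hlb; apply/eqP; rewrite eq_le; apply/andP; split; last first.
  by apply: lb_le_inf; [exists M|move=> x /hlb].
by apply: ge_inf => //; exists M => x /hlb.
Qed.

End Dec.

Unset Implicit Arguments.
Set Strict Implicit.

Section Final.
Variable R : realType.
Variables (m : nat) (Hm : (0 < m)%N) (Y : 'I_m -> finType)
  (P : forall j : 'I_m, bool -> Y j -> R) (HP : forall j, experiment (P j)).
Variables (k : nat) (A : 'I_k -> finType) (HA : forall l, #|A l| = 2%N)
  (u : forall l : 'I_k, bool -> A l -> R).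

Definition a0 (l : 'I_k) : A l.
Proof.
case: (pickP (A l)) => [a _|h]; first exact: a.
exfalso; have := HA l; rewrite eq_card0 //.
Defined.

Lemma two l : exists a b : A l, forall z, z = a \/ z = b.
Proof.
have := HA l; rewrite cardE.
case E: (enum (A l)) => [|a [|b [|c s]]] //= _.
exists a, b => z; have : z \in enum (A l) by rewrite mem_enum.
by rewrite E !inE => /orP[/eqP|/eqP]; [left|right].
Qed.

Lemma best2 l a b (hab : forall z : A l, z = a \/ z = b) (Ys : finType) (Q : bool -> Ys -> R) :
  best (a0 l) Q (u l) =
  \sum_(y : Ys) Phi (u l true a) (u l false a) (u l true b) (u l false b) (Q true y) (Q false y).
Proof.
apply: eq_bigr => y _.
set f := (fun a => \sum_th Q th y * u l th a).
have ef : forall z, f z = Q true y * u l true z + Q false y * u l false z.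
  by move=> z; rewrite /f big_bool.
rewrite /Phi -!ef; apply/eqP; rewrite eq_le; apply/andP; split.
  have [z ->] := mxA_eq (a0 l) f.
  by case: (hab z) => ->; rewrite le_max lexx ?orbT.
by rewrite ge_max !mxA_ge.
Qed.

Definition kinkf l (z1 z2 : A l) : R :=
  - (u l false z1 - u l false z2) /
    (u l true z1 - u l false z1 - u l true z2 + u l false z2).

Definition ks : seq R := flatten [seq flatten [seq [seq kinkf l z1 z2 | z2 <- enum (A l)]
   | z1 <- enum (A l)] | l <- enum 'I_k].

Lemma kin l (a b : A l) : kinkf l a b \in ks.
Proof.
apply/flattenP; exists (flatten [seq [seq kinkf l z1 z2 | z2 <- enum (A l)] | z1 <- enum (A l)]).
  by apply/mapP; exists l; rewrite ?mem_enum.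
apply/flattenP; exists [seq kinkf l a z2 | z2 <- enum (A l)].
  by apply/mapP; exists a; rewrite ?mem_enum.
by apply/mapP; exists b; rewrite ?mem_enum.
Qed.


Definition jz : 'I_m := Ordinal Hm.

Lemma best_Q (Q : bool -> signals Y -> R) :
  (forall A B C D : R,
   (A - B - C + D != 0 -> 0 <= - (B - D) / (A - B - C + D) <= 1 ->
     - (B - D) / (A - B - C + D) \in ks) ->
   exists j, \sum_(y : signals Y) Phi A B C D (Q true y) (Q false y) <=
             \sum_(z : Y j) Phi A B C D (P j true z) (P j false z)) ->
  forall l, exists j, best (a0 l) Q (u l) <= best (a0 l) (P j) (u l).
Proof.
move=> hQ l; have [a [b hab]] := two l.
have [j hj] := hQ (u l true a) (u l false a) (u l true b) (u l false b) (fun _ _ => kin l a b).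
by exists j; rewrite (best2 l a b hab _ Q) (best2 l a b hab _ (P j)).
Qed.

Definition Mx l := fmax (fun j => best (a0 l) (P j) (u l)) jz (enum 'I_m).

Lemma sup_V1 l : sup [set x | exists j : 'I_m, x = V1 (P j) (u l)] = Mx l.
Proof.
apply: sup_attained.
  have [j hj] := fmax_eq (fun j => best (a0 l) (P j) (u l)) jz (enum 'I_m).
  by exists j; rewrite /Mx hj (V1_best (a0 l)).
move=> x [j ->]; rewrite (V1_best (a0 l)).
by apply: (@fmax_ge R _ (fun j => best (a0 l) (P j) (u l)) jz (enum 'I_m) j); rewrite mem_enum.
Qed.

Lemma payoff_lift (Act : finType) (v : bool -> Act -> R) j (tau : Y j -> Act -> R) Q :
  coupling P Q -> payoff Q v (fun y => tau (y j)) = payoff (P j) v tau.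
Proof.
move=> [hQe hQm]; rewrite /payoff; apply: eq_bigr => th _.
rewrite (partition_big (fun y : signals Y => y j) predT) //=.
apply: eq_bigr => yj _; rewrite -(hQm th j yj) big_distrl /=.
by apply: eq_big => [y|y /eqP ->] //.
Qed.

Lemma worst_le (Act : finType) (v : bool -> Act -> R) sg Q :
  coupling P Q -> strategy sg -> worst P v sg <= payoff Q v sg.
Proof.
move=> hc hs; rewrite /worst.
have hlb : has_lbound [set x | exists Q, coupling P Q /\ x = payoff Q v sg].
  by exists (- (2 * ubnd v)) => x [Q' [[he _] ->]]; apply: payoff_lb.
by apply: (ge_inf hlb); exists Q.
Qed.

Lemma worst_lift (Act : finType) (v : bool -> Act -> R) j (tau : Y j -> Act -> R) :
  worst P v (fun y => tau (y j)) = payoff (P j) v tau.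
Proof.
have [Qs [hQs _]] := coupling_main R m Hm Y P HP ks.
apply: inf_attained; first by exists Qs; split => //; rewrite payoff_lift.
by move=> x [Q [hc ->]]; rewrite payoff_lift.
Qed.

Lemma opt l : exists sg : signals Y -> A l -> R, strategy sg /\ worst P (u l) sg = Mx l.
Proof.
have [j hj] := fmax_eq (fun j => best (a0 l) (P j) (u l)) jz (enum 'I_m).
have [tau [htau hp]] := best_attained (a0 l) (P j) (u l).
exists (fun y : signals Y => tau (y j)); split; first by move=> y; apply: htau.
by rewrite worst_lift hp /Mx hj.
Qed.

Lemma strategy_prod (sg : forall l, signals Y -> A l -> R) :
  (forall l, strategy (sg l)) -> strategy (prod_strategy sg).
Proof.
move=> hs y; split.
  by move=> a; apply: prodr_ge0 => l _; case: (hs l y) => h _; apply: h.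
rewrite /prod_strategy (dffun_sum_prod (fun l (z : A l) => sg l y z)).
by apply: big1 => l _; case: (hs l y).
Qed.

Lemma mixed_prod th (sg : forall l, signals Y -> A l -> R) y :
  (forall l, \sum_(z : A l) sg l y z = 1) ->
  mixed_util (comp_util u) th (prod_strategy sg y) = \sum_l mixed_util (u l) th (sg l y).
Proof.
move=> hs; rewrite /mixed_util /comp_util /prod_strategy.
under eq_bigr do rewrite mulr_sumr.
rewrite exchange_big /=; apply: eq_bigr => l _.
pose F l' (z : A l') := sg l' y z * (if l' == l then u l' th z else 1).
transitivity (\sum_(a : comp_actions A) \prod_l' F l' (a l')).
  apply: eq_bigr => a _; rewrite /F big_split /=; congr (_ * _).
  rewrite (bigD1 l) //= eqxx big1 ?mulr1 // => l' /negbTE ->; done.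
rewrite (dffun_sum_prod F) (bigD1 l) //= [X in _ * X]big1 ?mulr1.
  by apply: eq_bigr => z _; rewrite /F eqxx.
move=> l' /negbTE hl; rewrite /F; under eq_bigr do rewrite hl mulr1.
exact: hs.
Qed.

Lemma payoff_prod Q (sg : forall l, signals Y -> A l -> R) :
  (forall l, strategy (sg l)) ->
  payoff Q (comp_util u) (prod_strategy sg) = \sum_l payoff Q (u l) (sg l).
Proof.
move=> hs; rewrite /payoff.
have hs1 : forall y l, \sum_(z : A l) sg l y z = 1 by move=> y l; case: (hs l y).
under eq_bigr do under eq_bigr do rewrite (mixed_prod _ _ _ (hs1 _)) mulr_sumr.
rewrite exchange_big /=; under eq_bigr do rewrite exchange_big /=.
rewrite exchange_big /=; apply: eq_bigr => l _; exact: exchange_big.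
Qed.

Lemma worst_prod (sg : forall l, signals Y -> A l -> R) :
  (forall l, strategy (sg l)) ->
  \sum_l worst P (u l) (sg l) <= worst P (comp_util u) (prod_strategy sg).
Proof.
move=> hs; rewrite [X in _ <= X]/worst.
have [Qs [hQs _]] := coupling_main R m Hm Y P HP ks.
apply: lb_le_inf; first by exists (payoff Qs (comp_util u) (prod_strategy sg)); exists Qs.
move=> x [Q [hc ->]]; rewrite payoff_prod //; apply: ler_sum => l _.
exact: worst_le.
Qed.

Lemma payoff_comp_le Q (sg : signals Y -> comp_actions A -> R) : strategy sg ->
  payoff Q (comp_util u) sg <= \sum_l best (a0 l) Q (u l).
Proof.
move=> hs; rewrite payoffE /best [X in _ <= X]exchange_big /=; apply: ler_sum => y _.
case: (hs y) => h0 h1.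
apply: (@le_trans _ _ (\sum_(a : comp_actions A) sg y a *
     \sum_l mxA (a0 l) (fun z => \sum_th Q th y * u l th z))).
  apply: ler_sum => a _; apply: ler_wpM2l => //.
  rewrite /comp_util; under eq_bigr do rewrite mulr_sumr.
  rewrite exchange_big /=; apply: ler_sum => l _.
  exact: (mxA_ge (a0 l) (fun z => \sum_th Q th y * u l th z) (a l)).
by rewrite -mulr_suml h1 mul1r.
Qed.

Lemma UB (sg : signals Y -> comp_actions A -> R) : strategy sg ->
  worst P (comp_util u) sg <= \sum_l Mx l.
Proof.
move=> hs; have [Qs [hc hv]] := coupling_main R m Hm Y P HP ks.
apply: le_trans (worst_le _ _ _ _ hc hs) _; apply: le_trans (payoff_comp_le _ _ hs) _.
apply: ler_sum => l _; have [j hj] := best_Q _ hv l; apply: le_trans hj _.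
by apply: (@fmax_ge R _ (fun j => best (a0 l) (P j) (u l)) jz (enum 'I_m) j); rewrite mem_enum.
Qed.

Lemma main_thm :
  Vrob P (comp_util u) = \sum_(l < k) sup [set x | exists j : 'I_m, x = V1 (P j) (u l)]
  /\
  forall sg : forall l : 'I_k, signals Y -> A l -> R,
    (forall l, robustly_optimal P (u l) (sg l)) ->
    robustly_optimal P (comp_util u) (prod_strategy sg).
Proof.
pose sig l := proj1_sig (cid (opt l)).
have hsig : forall l, strategy (sig l) /\ worst P (u l) (sig l) = Mx l.
  by move=> l; exact: (proj2_sig (cid (opt l))).
have esum : \sum_(l < k) sup [set x | exists j : 'I_m, x = V1 (P j) (u l)] = \sum_l Mx l.
  by apply: eq_bigr => l _; apply: sup_V1.
have hs : forall l, strategy (sig l) by move=> l; case: (hsig l).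
split.
  rewrite esum /Vrob; apply: sup_attained.
    exists (prod_strategy sig); split; first exact: strategy_prod.
    apply/eqP; rewrite eq_le; apply/andP; split; last exact: (UB _ (strategy_prod _ hs)).
    apply: le_trans (worst_prod _ hs); rewrite le_eqVlt; apply/orP; left; apply/eqP.
    by apply: eq_bigr => l _; case: (hsig l).
  by move=> x [sg [hsg ->]]; apply: UB.
move=> sg hro; have hs' : forall l, strategy (sg l) by move=> l; case: (hro l).
split; first exact: strategy_prod.
move=> sg' hsg'; apply: le_trans (UB _ hsg') _; apply: le_trans (worst_prod _ hs').
apply: ler_sum => l _; case: (hsig l) => h1 <-.
by case: (hro l) => _; apply.
Qed.

End Final.

Unset Implicit Arguments.
Set Strict Implicit.
Local Open Scope classical_set_scope.

Theorem lemma4 (R : realType) (m : nat) (Hm : (0 < m)%N)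
  (Y : 'I_m -> finType) (P : forall j : 'I_m, bool -> Y j -> R)
  (HP : forall j, experiment (P j))
  (k : nat) (A : 'I_k -> finType) (HA : forall l, #|A l| = 2%N)
  (u : forall l : 'I_k, bool -> A l -> R) :
  Vrob P (comp_util u) = \sum_(l < k) sup [set x | exists j : 'I_m, x = V1 (P j) (u l)]
  /\
  forall sg : forall l : 'I_k, signals Y -> A l -> R,
    (forall l, robustly_optimal P (u l) (sg l)) ->
    robustly_optimal P (comp_util u) (prod_strategy sg).
Proof.
exact: (main_thm R m Hm Y P HP k A HA u).
Qed.
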